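(* Let $\gamma>0$, $k>1$ an integer, $1\le c_0\le 2$, and $$\eta_{k,\gamma,c_0}=\min\left\{u\in(0,1):\ c_0\left(1-\left(\frac{u}{2k}\right)^{1/k}\right)^\gamma+\left(1-\frac{u}{2k}\right)^\gamma\le 1\right\}.$$ Then $$\eta_{k,\gamma,c_0}\le\min\left\{u\in(0,1):\ \log c_0+\gamma\log\log\frac{2k}{u}-\gamma\log k+\log\left(1+\frac{2k}{u\gamma}\right)\le 0\right\}.$$
   Context: In the paper $\gamma=(1-\alpha)/\alpha$ for a stability index $0<\alpha<1$. *)

(* Defs.v *)
From HB Require Import structures.
From mathcomp Require Import all_boot all_order all_algebra.
From mathcomp Require Import all_classical all_reals all_analysis.
Set Implicit Arguments. Unset Strict Implicit. Unset Printing Implicit Defensive.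
Import Order.TTheory GRing.Theory Num.Theory.
Local Open Scope ring_scope.

Definition is_min {R : realType} (S : R -> Prop) (m : R) : Prop :=
  S m /\ (forall u, S u -> m <= u).

Definition eta_set {R : realType} (k : nat) (gamma c0 : R) (u : R) : Prop :=
  0 < u < 1 /\
  c0 * (1 - (u / (2 * k%:R)) `^ (k%:R)^-1) `^ gamma
    + (1 - u / (2 * k%:R)) `^ gamma <= 1.

Definition bound_set {R : realType} (k : nat) (gamma c0 : R) (u : R) : Prop :=
  0 < u < 1 /\
  ln c0 + gamma * ln (ln (2 * k%:R / u)) - gamma * ln k%:R
    + ln (1 + 2 * k%:R / (u * gamma)) <= 0.

(* Main.v *)
Require Import Defs.
From HB Require Import structures.
From mathcomp Require Import all_boot all_order all_algebra.
From mathcomp Require Import all_classical all_reals all_analysis.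
From mathcomp Require Import ring lra zify.
Import Order.TTheory GRing.Theory Num.Theory.
Local Open Scope ring_scope.

Lemma key (R : realType) (gamma : R) (k : nat) (c0 : R)
  (hgamma : 0 < gamma) (hk : (1 < k)%N) (hc0 : 1 <= c0 <= 2) (u : R) :
  bound_set k gamma c0 u -> eta_set k gamma c0 u.
Proof.
case=> /andP[u0 u1] hb; split; first by apply/andP.
set K : R := k%:R.
have K0 : 0 < K by rewrite /K ltr0n; lia.
have K1 : 1 < K by rewrite /K ltr1n.
have c00 : 0 < c0 by case/andP: hc0 => h _; lra.
set x := u / (2 * K).
have x0 : 0 < x by rewrite /x divr_gt0 // mulr_gt0.
have x1 : x < 1.
  by rewrite /x ltr_pdivrMr ?mulr_gt0 //; lra.
set L := ln (2 * K / u).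
have hL0 : 1 < 2 * K / u by rewrite ltr_pdivlMr //; lra.
have L0 : 0 < L by apply: ln_gt0.
have lnx : ln x = - L.
  rewrite /L -lnV ?posrE ?divr_gt0 ?mulr_gt0 //.
  by rewrite /x invf_div.
have e1 : x `^ K^-1 = expR (- (L / K)).
  by rewrite /powR gt_eqF // lnx mulrN mulrC.
have h1a : 0 <= 1 - x `^ K^-1.
  rewrite e1 subr_ge0 expR_le1 oppr_le0; exact/ltW/divr_gt0.
have h1b : 1 - x `^ K^-1 <= L / K.
  have := expR_ge1Dx (- (L / K)); rewrite e1; lra.
have h1 : (1 - x `^ K^-1) `^ gamma <= (L / K) `^ gamma.
  apply: ge0_ler_powR => //; first exact: ltW.
  all: try by rewrite nnegrE.
  all: try by rewrite nnegrE; apply/ltW/divr_gt0.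

have h2 : (1 - x) `^ gamma <= (1 + gamma * x)^-1.
  have lx : ln (1 - x) <= - x by apply: le_ln1Dx; lra.
  rewrite /powR gt_eqF; last lra.
  apply: (@le_trans _ _ (expR (- (gamma * x)))).
    by rewrite ler_expR -(mulrN gamma) ler_pM2l.
  rewrite expRN lef_pV2 ?posrE ?expR_gt0 //; last by rewrite addr_gt0 // mulr_gt0.
  exact: expR_ge1Dx.
set B := 1 + 2 * K / (u * gamma).
have B0 : 0 < B by rewrite /B addr_gt0 // divr_gt0 ?mulr_gt0.
set A := (L / K) `^ gamma.
have A0 : 0 < A by rewrite /A powR_gt0 // divr_gt0.
have h3 : c0 * A * B <= 1.
  have P0 : 0 < c0 * A * B by rewrite !mulr_gt0.
  have lnP : ln (c0 * A * B) = ln c0 + gamma * ln L - gamma * ln K + ln B.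
    rewrite lnM ?posrE ?mulr_gt0 // lnM ?posrE // /A ln_powR.
    rewrite ln_div ?posrE //; ring.
  rewrite -(lnK P0) lnP -expR0 ler_expR; exact: hb.
have hB : B^-1 + (1 + gamma * x)^-1 = 1.
  rewrite /B /x; field.
  rewrite -/K !lt0r_neq0 //; first by rewrite addr_gt0 ?mulr_gt0.
have h4 : c0 * A <= B^-1 by rewrite -div1r ler_pdivlMr.
have := ler_pM2l c00; move=> hm.
have h5 : c0 * (1 - x `^ K^-1) `^ gamma <= c0 * A by rewrite hm.
lra.
Qed.

Theorem lemma5 (R : realType) (gamma : R) (k : nat) (c0 : R)
  (hgamma : 0 < gamma) (hk : (1 < k)%N) (hc0 : 1 <= c0 <= 2)
  (eta m : R) :
  is_min (eta_set k gamma c0) eta ->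
  is_min (bound_set k gamma c0) m ->
  eta <= m.
Proof.
move=> [_ He] [Hm _]; apply: He; exact: key Hm.
Qed.
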